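(* Let $p$ be a prime, $m\ge 1$ and $r$ integers with $r^p\equiv 1 \pmod m$, and let $G=\langle x, y\mid x^p=y^m=1,\ x^{-1}yx=y^r\rangle$ (so $G\cong C_p\ltimes C_m$, $|G|=pm$), where $p$ is the smallest prime divisor of $|G|$ and $\gcd(p(r-1), m)=1$. Let $N=\langle y\rangle$, let $M$ be any subgroup of $N$, let $u\in N$, and let $0\le s<s'\le p-1$ be integers. Then: (i) if $u^{r^s}\in M$, then $\{u, u^{r},\ldots, u^{r^{p-1}}\}\subseteq M$; (ii) if $u^{r^s}$ and $u^{r^{s'}}$ lie in the same coset of $M$, then $\{u, u^{r},\ldots, u^{r^{p-1}}\}\subseteq M$; (iii) if $u\neq 1$, then $u^{r^s}\neq u^{r^{s'}}$. *)

(* Defs.v *)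
From mathcomp Require Import all_boot all_algebra all_fingroup.
Set Implicit Arguments. Unset Strict Implicit. Unset Printing Implicit Defensive.
Import GRing.Theory Num.Theory.

Definition expgz (gT : finGroupType) (g : gT) (z : int) : gT :=
  match z with
  | Posz n => (g ^+ n)%g
  | Negz n => (g ^+ n.+1)^-1%g
  end.

(* Main.v *)
Require Import Defs.
From mathcomp Require Import all_boot all_algebra all_fingroup.
From mathcomp Require Import ring.
From mathcomp Require Import cyclic.
Import GRing.Theory Num.Theory.
Local Open Scope ring_scope.

Lemma pow_eq (gT : finGroupType) (u : gT) (m n n' : nat) :
  (u ^+ m = 1)%g -> ((n%:Z) = n'%:Z %[mod m%:Z])%Z -> (u ^+ n = u ^+ n')%g.
Proof.
move=> Hm H; rewrite -(expg_mod _ Hm) -(expg_mod n' Hm); congr (_ ^+ _)%g.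
by apply/eqP; rewrite -eqz_nat -!modz_nat H.
Qed.

Definition fz (m : nat) (z : int) : nat := absz (z %% m%:Z)%Z.

Lemma fzE m z : (0 < m)%N -> (fz m z)%:Z = (z %% m%:Z)%Z.
Proof. by move=> m0; rewrite /fz gez0_abs // modz_ge0 // eqz_nat -lt0n. Qed.

Lemma expgz_f (gT : finGroupType) (u : gT) (m : nat) z : (0 < m)%N ->
  (u ^+ m = 1)%g -> expgz u z = (u ^+ fz m z)%g.
Proof.
move=> m0 Hm; case: z => k /=.
  by apply: pow_eq Hm _; rewrite fzE // modz_mod.
apply/eqP; rewrite eq_invg_mul -expgD; apply/eqP.
rewrite (@pow_eq _ _ _ _ 0 Hm) //.
by rewrite PoszD fzE // modzDmr NegzE addrN.
Qed.

Lemma pow_sub1 (d x : int) a : (d %| x - 1)%Z -> (d %| x ^+ a - 1)%Z.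
Proof.
move=> H; elim: a => [|a IH]; first by rewrite expr0 subrr dvdz0.
have -> : x ^+ a.+1 - 1 = x * (x ^+ a - 1) + (x - 1) by rewrite exprS; ring.
by rewrite rpredD // dvdz_mull.
Qed.

Lemma key (d r : int) (p t : nat) : prime p -> (0 < t)%N -> (t < p)%N ->
  (d %| r ^+ p - 1)%Z -> (d %| r ^+ t - 1)%Z -> (d %| r - 1)%Z.
Proof.
move=> pp t0 tp Hp Ht.
have cop : coprime t p by rewrite coprime_sym prime_coprime // gtnNdvd.
have [a _ Ha] := Bezoutl p t0.
rewrite (eqP cop) in Ha.
set k := ((1 + a * p) %/ t)%N.
have Hk : (k * t = a * p + 1)%N by rewrite divnK // addnC.
have H1 : (d %| r ^+ (k * t) - 1)%Z by rewrite mulnC exprM pow_sub1.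
have H2 : (d %| r ^+ (a * p) - 1)%Z by rewrite mulnC exprM pow_sub1.
rewrite Hk exprD expr1 in H1.
have -> : r - 1 = (r ^+ (a * p) * r - 1) - r * (r ^+ (a * p) - 1) by ring.
by rewrite rpredB // dvdz_mull.
Qed.

Lemma cop_t (r : int) (m p t : nat) : prime p -> (0 < t)%N -> (t < p)%N ->
  (m%:Z %| r ^+ p - 1)%Z -> coprimez (r - 1) m -> coprimez (r ^+ t - 1) m.
Proof.
move=> pp t0 tp Hp Hc.
have H : (gcdz (r ^+ t - 1) m %| 1)%Z.
  rewrite -[X in (_ %| X)%Z](eqP Hc) dvdz_gcd dvdz_gcdr andbT.
  apply: (@key _ r p t pp t0 tp); last exact: dvdz_gcdl.
  exact: dvdz_trans (dvdz_gcdr _ _) Hp.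
by rewrite dvdz1 in H; rewrite /coprimez /gcdz eqz_nat.
Qed.

Lemma cop_r (r : int) (m p : nat) : prime p ->
  (m%:Z %| r ^+ p - 1)%Z -> coprimez r m.
Proof.
move=> pp Hp.
have H : (gcdz r m %| r ^+ p - (r ^+ p - 1))%Z.
  rewrite rpredB //; first by rewrite dvdz_exp ?prime_gt0 // dvdz_gcdl.
  exact: dvdz_trans (dvdz_gcdr _ _) Hp.
have e : r ^+ p - (r ^+ p - 1) = 1 by ring.
by rewrite e dvdz1 in H; rewrite /coprimez /gcdz eqz_nat.
Qed.

Theorem lemma3p1 (gT : finGroupType) (p m : nat) (r : int) (x y : gT)
    (M : {group gT}) (u : gT) (s s' : nat) :
    prime p -> (1 <= m)%N ->
    ((r ^+ p)%R == 1 %[mod m%:Z])%Z ->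
    (* G = <x, y | x^p = y^m = 1, x^-1 y x = y^r >, |G| = p m *)
    #[x]%g = p -> #[y]%g = m ->
    (x^-1 * y * x)%g = expgz y r ->
    #|<<[set x; y]>>%g| = (p * m)%N ->
    (* p is the smallest prime divisor of |G| *)
    (forall q, prime q -> (q %| #|<<[set x; y]>>%g|)%N -> (p <= q)%N) ->
    coprimez (p%:Z * (r - 1))%R m%:Z ->
    (M \subset <[y]>)%g ->
    u \in <[y]>%g ->
    (s < s')%N -> (s' <= p.-1)%N ->
    [/\ (expgz u (r ^+ s)%R \in M ->
           forall i, (i <= p.-1)%N -> expgz u (r ^+ i)%R \in M),
        ((M :* expgz u (r ^+ s)%R)%g = (M :* expgz u (r ^+ s')%R)%g ->
           forall i, (i <= p.-1)%N -> expgz u (r ^+ i)%R \in M)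
      & (u != 1%g -> expgz u (r ^+ s)%R != expgz u (r ^+ s')%R)].
Proof.
move=> pp m0 Hmod _ Hy _ _ _ Hco _ Hu ss' s'p.
have Hum : (u ^+ m = 1)%g.
  by apply/eqP; rewrite -order_dvdn -Hy; apply: order_dvdG.
have Hdiv : (m%:Z %| r ^+ p - 1)%Z by rewrite -eqz_mod_dvd.
have Hr1 : coprimez (r - 1) m by move: Hco; rewrite coprimezMl => /andP[].
have EF z : expgz u z = (u ^+ fz m z)%g by apply: expgz_f.
have inM (K : {group gT}) : u \in K -> forall i, expgz u (r ^+ i) \in K.
  by move=> uK i; rewrite EF groupX.
have uM1 (K : {group gT}) a : expgz u (r ^+ a) \in K -> u \in K.
  rewrite EF => H.
  have -> : u = ((u ^+ fz m (r ^+ a)) ^+ fz m (r ^+ (a * p.-1)))%g.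
    rewrite -expgM -{1}(expg1 u); apply: pow_eq Hum _.
    rewrite PoszM !fzE // modzMml modzMmr -exprD.
    have -> : (a + a * p.-1 = p * a)%N.
      by rewrite -{1}(muln1 a) -mulnDr mulnC add1n prednK // prime_gt0.
    by rewrite exprM -modzXm (eqP Hmod) modzXm expr1n.
  exact: groupX.
have cos (K : {group gT}) : (K :* expgz u (r ^+ s))%g = (K :* expgz u (r ^+ s'))%g -> u \in K.
  rewrite !EF => H.
  set A := fz m (r ^+ s); set B := fz m (r ^+ s').
  set D := fz m (r ^+ s' - r ^+ s).
  have HB : ((u ^+ B) * (u ^+ A)^-1 \in K)%g by rewrite -mem_rcoset H rcoset_refl.
  have eB : (u ^+ B = u ^+ D * u ^+ A)%g.
    rewrite -expgD; apply: pow_eq Hum _.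
    by rewrite PoszD !fzE // modzDml modzDmr subrK modz_mod.
  rewrite eB mulgK in HB.
  have cope : coprimez (r ^+ s' - r ^+ s) m.
    have -> : r ^+ s' - r ^+ s = r ^+ s * (r ^+ (s' - s) - 1).
      by rewrite mulrBr mulr1 -exprD subnKC // ltnW.
    rewrite coprimezMl; apply/andP; split.
      by apply: coprimezXl; exact: (@cop_r r m p pp Hdiv).
    apply: (@cop_t r m p (s' - s) pp) => //; first by rewrite subn_gt0.
    have s'lt : (s' < p)%N by rewrite (leq_ltn_trans s'p) // ltn_predL prime_gt0.
    exact: leq_ltn_trans (leq_subr s s') s'lt.
  have [[c1 c2] /= Hc] := coprimezP _ _ cope.
  have -> : u = ((u ^+ D) ^+ fz m c1)%g.
    rewrite -expgM -{1}(expg1 u); apply: pow_eq Hum _.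
    have Hc' : c1 * (r ^+ s' - r ^+ s) + c2 * m = 1%Z := Hc.
    rewrite PoszM !fzE // modzMml modzMmr -Hc' addrC modzMDl mulrC.
    reflexivity.
  by rewrite groupX.
split.
- by move=> H i _; apply: inM; apply: uM1 H.
- by move=> H i _; apply: inM; apply: cos H.
- move=> u1; apply/contra: u1 => /eqP He.
  have := cos 1%G; rewrite He => /(_ erefl).
  by rewrite inE.
Qed.
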